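(* Let $G=(V,E)$ be a multigraph with $n$ vertices and $m$ edges. Consider a process that performs $n-1$ edge contractions, with arbitrarily many edge deletions allowed between consecutive contractions; let $G_k$ denote the graph just before the $k$-th contraction (so $G_1=G$ if no deletions precede it), and let $u_kv_k$ be the edge of $G_k$ contracted at step $k$, for $k\in[n-1]$. Suppose that for some $\alpha>0$, the cost of the $k$-th contraction is at most $\alpha\cdot\min\{\deg_{G_k}(u_k),\deg_{G_k}(v_k)\}$ for every $k$. Then the total cost of all contractions is $O(\alpha m\log n)$; equivalently, $\sum_{k=1}^{n-1}\min\{\deg_{G_k}(u_k),\deg_{G_k}(v_k)\}=O(m\log n)$.
   Context: Contracting an edge $uv$ identifies $u$ and $v$ into a single vertex and removes the edges between $u$ and $v$; other edges (possibly becoming parallel) are kept with endpoints updated. Degrees count incident edges with multiplicity. *)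

(* Defs.v *)
From mathcomp Require Import all_boot all_order all_algebra.
Set Implicit Arguments. Unset Strict Implicit. Unset Printing Implicit Defensive.

(* A (loopless) multigraph is given by a duplicate-free vertex list V : seq nat
   and an edge multiset E : seq (nat * nat); an edge (a,b) joins a and b
   (orientation irrelevant), parallel edges are repeated entries. *)

Definition is_multigraph (V : seq nat) (E : seq (nat * nat)) : Prop :=
  uniq V /\ (forall e, e \in E -> [/\ e.1 \in V, e.2 \in V & e.1 != e.2]).

Definition deg (E : seq (nat * nat)) (x : nat) : nat :=
  count (fun e : nat * nat => (e.1 == x) || (e.2 == x)) E.

Definition sub_mset (E' E : seq (nat * nat)) : Prop :=
  forall e, count_mem e E' <= count_mem e E.

Definition has_edge (E : seq (nat * nat)) (u v : nat) : bool :=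
  ((u, v) \in E) || ((v, u) \in E).

Definition ren (u v x : nat) : nat := if x == v then u else x.

Definition contractE (u v : nat) (E : seq (nat * nat)) : seq (nat * nat) :=
  [seq (ren u v e.1, ren u v e.2) | e <- E &
     ~~ (((e.1 == u) && (e.2 == v)) || ((e.1 == v) && (e.2 == u)))].

Definition contractV (u v : nat) (V : seq nat) : seq nat := rem v V.

(* A contraction process of G=(V,E) with n-1 contractions:
   (Vs k, Es k) is G_{k+1} (0-indexed), the graph just before the (k+1)-th
   contraction, and (us k, vs k) the contracted edge. *)
Definition contraction_process (V : seq nat) (E : seq (nat * nat))
    (Vs : nat -> seq nat) (Es : nat -> seq (nat * nat)) (us vs : nat -> nat) : Prop :=
  [/\ Vs 0 = V, sub_mset (Es 0) E,
      (forall k, k < (size V).-1 ->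
         [/\ us k \in Vs k, vs k \in Vs k, us k != vs k & has_edge (Es k) (us k) (vs k)])
    & (forall k, k.+1 < (size V).-1 ->
         Vs k.+1 = contractV (us k) (vs k) (Vs k) /\
         sub_mset (Es k.+1) (contractE (us k) (vs k) (Es k)))].

(* Main.v *)
Require Import Defs.
From mathcomp Require Import all_boot all_order all_algebra.
From mathcomp Require Import zify.
Import Order.TTheory GRing.Theory Num.Theory.

Lemma sub_mset_sum (E' E : seq (nat * nat)) (h : nat * nat -> nat) :
  sub_mset E' E -> (\sum_(e <- E') h e <= \sum_(e <- E) h e)%N.
Proof.
elim: E' E => [|x E' IH] E H; first by rewrite big_nil.
have xE : x \in E.
  have := H x; rewrite /= eqxx => Hc; rewrite -has_pred1 has_count; exact: leq_trans _ Hc.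
rewrite big_cons (big_rem x xE) /= leq_add2l; apply: IH => e.
rewrite count_rem xE /=; have := H e; rewrite /= .
by case: (x == e) => /=; lia.
Qed.

Lemma sum_rem_uniq (s : seq nat) x (f : nat -> nat) : x \in s ->
  \sum_(y <- s) f y = f x + \sum_(y <- rem x s) f y.
Proof. by move=> xs; rewrite (big_rem x xs). Qed.

Definition g (L : nat) (w : nat -> nat) (x : nat) : nat := L - trunc_log 2 (w x).
Definition Phi L w (E : seq (nat * nat)) : nat := \sum_(e <- E) (g L w e.1 + g L w e.2).
Definition wupd (w : nat -> nat) (u v : nat) (y : nat) : nat :=
  if y == u then w u + w v else w y.
Definition sel (w : nat -> nat) (u v : nat) : nat := if w u <= w v then u else v.

Lemma endpoint L n (w : nat -> nat) u v x : u != v -> 0 < w u -> 0 < w v ->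
  w u + w v <= n -> trunc_log 2 n <= L ->
  g L (wupd w u v) (ren u v x) + (x == sel w u v) <= g L w x.
Proof.
move=> nuv wu0 wv0 Hn HL.
set s := sel w u v.
have ws0 : 0 < w s by rewrite /s /sel; case: ifP.
have Hs : (w s).*2 <= w u + w v by rewrite /s /sel -addnn; case: ifP => H; lia.
have H1 : (trunc_log 2 (w s)).+1 <= trunc_log 2 (w u + w v).
  by rewrite -trunc_log2_double // leq_trunc_log.
have H2 : trunc_log 2 (w u + w v) <= L by apply: leq_trans HL; apply: leq_trunc_log.
have Hsuv : (s == u) || (s == v) by rewrite /s /sel; case: ifP; rewrite eqxx ?orbT.
rewrite /g /wupd /ren.
have [xv|xv] := eqVneq x v.
  rewrite eqxx; subst x.
  have Hv : trunc_log 2 (w v) <= trunc_log 2 (w u + w v) by apply: leq_trunc_log; lia.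
  case: eqP => [Es|_]; last by rewrite addn0; lia.
  rewrite -Es in H1; lia.
have [xu|xu] := eqVneq x u.
  subst x.
  have Hv : trunc_log 2 (w u) <= trunc_log 2 (w u + w v) by apply: leq_trunc_log; lia.
  case: eqP => [Es|_]; last by rewrite addn0; lia.
  rewrite -Es in H1; lia.
have -> : (x == s) = false.
  apply/negbTE; move: Hsuv; case/orP => /eqP ->; by [].
by rewrite addn0.
Qed.

Lemma count_sum (P : pred (nat * nat)) (E : seq (nat * nat)) :
  count P E = \sum_(e <- E) (P e : nat).
Proof. by elim: E => [|x E IH]; rewrite ?big_nil ?big_cons //= IH. Qed.

Lemma step L n w u v (E : seq (nat * nat)) : u != v -> 0 < w u -> 0 < w v ->
  w u + w v <= n -> trunc_log 2 n <= L ->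
  deg E (sel w u v) + Phi L (wupd w u v) (contractE u v E) <= Phi L w E.
Proof.
move=> nuv wu0 wv0 Hn HL.
rewrite /deg /Phi /contractE big_map big_filter big_mkcond count_sum -big_split /=.
apply: leq_sum => e _.
have A := @endpoint L n w u v e.1 nuv wu0 wv0 Hn HL.
have B := @endpoint L n w u v e.2 nuv wu0 wv0 Hn HL.
case: (e.1 == sel w u v) A => /= A; case: (e.2 == sel w u v) B => /= B;
case: ifP => _; lia.
Qed.

Fixpoint wt (us vs : nat -> nat) (k : nat) : nat -> nat :=
  match k with 0 => fun _ => 1 | k'.+1 => wupd (wt us vs k') (us k') (vs k') end.

Lemma wt_gt0 us vs k x : 0 < wt us vs k x.
Proof.
elim: k x => [|k IH] x //=; rewrite /wupd; case: ifP => _ //; exact: ltn_addr.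
Qed.

Lemma trunc_le_up n : trunc_log 2 n <= up_log 2 n.
Proof.
case: n => [|n]; first by rewrite trunc_log0.
have := trunc_logP (isT : 1 < 2) (isT : 0 < n.+1).
have := @up_logP 2 n.+1 isT.
move=> A B; have := leq_trans B A; by rewrite leq_exp2l.
Qed.

Lemma two_le (s : seq nat) (w : nat -> nat) u v : uniq s -> u \in s -> v \in s -> u != v ->
  w u + w v <= \sum_(y <- s) w y.
Proof.
move=> us Hu Hv nuv.
have Hv' : v \in rem u s by rewrite (mem_rem_uniq _ us) inE eq_sym nuv.
rewrite (big_rem u Hu) (big_rem v Hv') /= addnA; exact: leq_addr.
Qed.

Lemma sum_step (s : seq nat) (w : nat -> nat) u v : uniq s -> u \in s -> v \in s -> u != v ->
  \sum_(y <- rem v s) wupd w u v y = \sum_(y <- s) w y.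
Proof.
move=> us Hu Hv nuv.
have Hu' : u \in rem v s by rewrite (mem_rem_uniq _ us) inE nuv.
have ur : uniq (rem v s) by apply: rem_uniq.
rewrite (big_rem u Hu') (big_rem v Hv) (big_rem u Hu') /wupd eqxx.
rewrite (eq_big_seq w) /=; first by lia.
move=> y; rewrite (mem_rem_uniq _ ur) inE => /andP [yu _]; by rewrite (negbTE yu).
Qed.

Lemma main_nat V E Vs Es us vs :
  is_multigraph V E -> contraction_process V E Vs Es us vs ->
  \sum_(0 <= k < (size V).-1) minn (deg (Es k) (us k)) (deg (Es k) (vs k))
     <= 2 * size E * up_log 2 (size V).
Proof.
move=> [uV _] [HV0 HE0 Hk Hk1].
set N := (size V).-1; set L := up_log 2 (size V).
set w := wt us vs.
have HL : trunc_log 2 (size V) <= L by apply: trunc_le_up.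
have Inv : forall k, k < N -> uniq (Vs k) /\ \sum_(y <- Vs k) w k y = size V.
  elim=> [|k IH] kN.
    by rewrite HV0; split => //; rewrite /w /= sum1_size.
  have [u1 u2 u3 _] := Hk k (ltnW kN).
  have [IH1 IH2] := IH (ltnW kN).
  have [-> _] := Hk1 k kN.
  split; first by apply: rem_uniq.
  by rewrite /contractV /w /= sum_step.
have S : forall k, k < N ->
    minn (deg (Es k) (us k)) (deg (Es k) (vs k))
    + Phi L (w k.+1) (contractE (us k) (vs k) (Es k)) <= Phi L (w k) (Es k).
  move=> k kN.
  have [u1 u2 u3 _] := Hk k kN.
  have [I1 I2] := Inv k kN.
  have Hn : w k (us k) + w k (vs k) <= size V by rewrite -I2; apply: two_le.
  have := @step L (size V) (w k) (us k) (vs k) (Es k) u3 (wt_gt0 _ _ _ _)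
     (wt_gt0 _ _ _ _) Hn HL.
  apply: leq_trans; rewrite leq_add2r /sel; case: ifP => _.
    exact: geq_minl.
  exact: geq_minr.
have Sub : forall k, k.+1 < N ->
    Phi L (w k.+1) (Es k.+1) <= Phi L (w k.+1) (contractE (us k) (vs k) (Es k)).
  move=> k kN; have [_ H] := Hk1 k kN; exact: sub_mset_sum.
have Chain : forall j, j < N ->
    \sum_(0 <= k < j.+1) minn (deg (Es k) (us k)) (deg (Es k) (vs k))
    + Phi L (w j.+1) (contractE (us j) (vs j) (Es j)) <= Phi L (w 0) (Es 0).
  elim=> [|j IH] jN.
    by rewrite big_nat1; apply: S.
  rewrite big_nat_recr //= -addnA.
  have := S j.+1 jN; have := Sub j jN; have := IH (ltnW jN); lia.
have Phi0 : Phi L (w 0) (Es 0) <= 2 * size E * L.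
  apply: (@leq_trans (\sum_(e <- Es 0) (2 * L))).
    apply: leq_sum => e _; rewrite /g; lia.
  have := @sub_mset_sum (Es 0) E (fun _ => 1) HE0.
  rewrite /= !sum1_size => H.
  rewrite -[2 * L]mul1n -big_distrl /= sum1_size; nia.
have [N0|Npos] := posnP N; first by rewrite N0 big_geq.
have := Chain N.-1; rewrite prednK // leqnn => /(_ isT) H.
apply: leq_trans Phi0; exact: leq_trans (leq_addr _ _) H.
Qed.

Theorem lemmaC3 :
  exists C : nat,
  forall (V : seq nat) (E : seq (nat * nat))
         (Vs : nat -> seq nat) (Es : nat -> seq (nat * nat)) (us vs : nat -> nat),
    is_multigraph V E ->
    contraction_process V E Vs Es us vs ->
    (\sum_(k < (size V).-1) minn (deg (Es k) (us k)) (deg (Es k) (vs k))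
       <= C * size E * up_log 2 (size V))%N
    /\
    (forall (R : realFieldType) (alpha : R) (cost : nat -> R),
       (0 < alpha)%R ->
       (forall k, (k < (size V).-1)%N ->
          (cost k <= alpha * (minn (deg (Es k) (us k)) (deg (Es k) (vs k)))%:R)%R) ->
       (\sum_(k < (size V).-1) cost k <= alpha * (C * size E * up_log 2 (size V))%:R)%R).
Proof.
exists 2 => V E Vs Es us vs HG HP.
have Hn := @main_nat V E Vs Es us vs HG HP; rewrite big_mkord in Hn.
split => // R alpha cost a0 Hc.
apply: (@le_trans _ _ (\sum_(k < (size V).-1)
     alpha * (minn (deg (Es k) (us k)) (deg (Es k) (vs k)))%:R)%R).
  by apply: ler_sum => k _; apply: Hc.
rewrite -mulr_sumr -natr_sum; apply: ler_wpM2l; [exact: ltW|]; rewrite ler_nat; exact: Hn.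
Qed.
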